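(* Let $n\ge 3$ and let $A_1A_2\dots A_n$ be a polygon in the Euclidean plane, with indices of vertices taken modulo $n$ (so $A_{n+1}=A_1$, etc.). Let $s,t$ be positive integers with $2s+t=n$, and let $M$ be a point of the plane distinct from all vertices $A_1,\dots,A_n$. Suppose that for every $i\in\{1,\dots,n\}$ and every $j\in\{i+s,i+s+1,\dots,i+s+t-1\}$ (indices mod $n$) the line $A_iM$ meets the line $A_jA_{j+1}$ in a single point $M_{ij}$, and that $M_{ij}\notin\{A_j,A_{j+1}\}$. Then $$\prod_{i=1}^{n}\ \prod_{j=i+s}^{i+s+t-1}\frac{\overline{M_{ij}A_j}}{\overline{M_{ij}A_{j+1}}}=(-1)^n .$$
   Context: For three collinear points $X,Y,Z$ with $X\neq Z$, $\frac{\overline{XY}}{\overline{XZ}}$ denotes the ratio of signed (directed) lengths along their common line: it equals $|XY|/|XZ|$ if $Y$ and $Z$ lie on the same side of $X$ on that line, and $-|XY|/|XZ|$ otherwise. *)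

(* Defs.v *)
From mathcomp Require Import all_boot all_order all_algebra.
Set Implicit Arguments. Unset Strict Implicit. Unset Printing Implicit Defensive.
Import Order.TTheory GRing.Theory Num.Theory.
Local Open Scope ring_scope.

Definition point (R : rcfType) := (R * R)%type.

(* X lies on the line through P and Q (for P <> Q this is exactly the line PQ):
   the cross product (Q - P) x (X - P) vanishes. *)
Definition on_line (R : rcfType) (P Q X : point R) : Prop :=
  (Q.1 - P.1) * (X.2 - P.2) - (Q.2 - P.2) * (X.1 - P.1) = 0.

Definition dot (R : rcfType) (U V : point R) : R := U.1 * V.1 + U.2 * V.2.

Definition vsub (R : rcfType) (U V : point R) : point R := (U.1 - V.1, U.2 - V.2).

Definition dist (R : rcfType) (X Y : point R) : R :=
  Num.sqrt ((Y.1 - X.1) ^+ 2 + (Y.2 - X.2) ^+ 2).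

(* Signed ratio  (XY-bar)/(XZ-bar)  for collinear X, Y, Z with X <> Z:
   |XY|/|XZ| if Y and Z lie on the same side of X on their common line
   (i.e. the vectors XY and XZ have positive dot product; if Y = X the
   value is 0 anyway), and -|XY|/|XZ| otherwise. *)
Definition sratio (R : rcfType) (X Y Z : point R) : R :=
  (if 0 < dot (vsub Y X) (vsub Z X) then 1 else -1) * (dist X Y / dist X Z).

(* Main.v *)
Require Import Defs.
From mathcomp Require Import all_boot all_order all_algebra ring zify.
Import Order.TTheory GRing.Theory Num.Theory.
Local Open Scope ring_scope.


Definition fP {R : rcfType} (M P W : point R) : R :=
  (M.1 - P.1) * (W.2 - P.2) - (M.2 - P.2) * (W.1 - P.1).

Lemma sratio_mu (R : rcfType) (X Y Z : point R) mu :
  Z <> X -> Y.1 - X.1 = mu * (Z.1 - X.1) -> Y.2 - X.2 = mu * (Z.2 - X.2) ->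
  sratio X Y Z = mu.
Proof.
case: X Y Z => [x1 x2] [y1 y2] [z1 z2] /= hZX h1 h2.
have qpos : 0 < (z1 - x1) ^+ 2 + (z2 - x2) ^+ 2.
  rewrite lt_def paddr_eq0 ?sqr_ge0 // !sqrf_eq0 addr_ge0 ?sqr_ge0 // andbT.
  apply/negP => /andP[e1 e2]; apply: hZX; congr pair; apply/eqP; rewrite -subr_eq0; by [].
rewrite /sratio /dist /dot /vsub /= h1 h2.
have -> : (mu * (z1 - x1)) ^+ 2 + (mu * (z2 - x2)) ^+ 2
   = mu ^+ 2 * ((z1 - x1) ^+ 2 + (z2 - x2) ^+ 2) by ring.
have -> : mu * (z1 - x1) * (z1 - x1) + mu * (z2 - x2) * (z2 - x2)
   = mu * ((z1 - x1) ^+ 2 + (z2 - x2) ^+ 2) by ring.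
rewrite sqrtrM ?sqr_ge0 // sqrtr_sqr -mulrA divff ?mulr1; last first.
  by rewrite gt_eqF // sqrtr_gt0.
rewrite pmulr_lgt0 //.
case: ifP => hmu; first by rewrite mul1r gtr0_norm.
rewrite ler0_norm ?mulN1r ?opprK //.
by rewrite leNgt hmu.
Qed.

Lemma term (R : rcfType) (P M X Y Z : point R) :
  on_line P M X -> on_line Y Z X -> X <> Y -> X <> Z -> fP M P Z != 0 ->
  sratio X Y Z = fP M P Y / fP M P Z.
Proof.
case: P M X Y Z => [p1 p2] [m1 m2] [x1 x2] [y1 y2] [z1 z2].
rewrite /on_line /fP /= => hX hYZ hXY hXZ hZ.
have qpos : 0 < (z1 - x1) ^+ 2 + (z2 - x2) ^+ 2.
  rewrite lt_def paddr_eq0 ?sqr_ge0 // !sqrf_eq0 addr_ge0 ?sqr_ge0 // andbT.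
  apply/negP => /andP[e1 e2]; apply: hXZ; congr pair; apply/eqP;
    rewrite eq_sym -subr_eq0; by [].
set q := _ + _ in qpos.
have cr0 : (y1 - x1) * (z2 - x2) - (y2 - x2) * (z1 - x1) = 0.
  by rewrite -hYZ; ring.
set mu := ((y1 - x1) * (z1 - x1) + (y2 - x2) * (z2 - x2)) / q.
have qn0 : q != 0 by rewrite gt_eqF.
have h1 : y1 - x1 = mu * (z1 - x1).
  apply: (mulIf qn0); rewrite /mu mulrAC divfK //.
  have : (y1 - x1) * q - ((y1 - x1) * (z1 - x1) + (y2 - x2) * (z2 - x2)) * (z1 - x1)
     = (z2 - x2) * ((y1 - x1) * (z2 - x2) - (y2 - x2) * (z1 - x1)) by rewrite /q; ring.
  by rewrite cr0 mulr0 => /eqP; rewrite subr_eq0 => /eqP.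
have h2 : y2 - x2 = mu * (z2 - x2).
  apply: (mulIf qn0); rewrite /mu mulrAC divfK //.
  have : (y2 - x2) * q - ((y1 - x1) * (z1 - x1) + (y2 - x2) * (z2 - x2)) * (z2 - x2)
     = - (z1 - x1) * ((y1 - x1) * (z2 - x2) - (y2 - x2) * (z1 - x1)) by rewrite /q; ring.
  by rewrite cr0 mulr0 => /eqP; rewrite subr_eq0 => /eqP.
rewrite (@sratio_mu _ (x1, x2) (y1, y2) (z1, z2) mu) //; last by move=> e; apply: hXZ.
rewrite -(mulfK hZ mu); congr (_ / _).
have ey1 : y1 = mu * (z1 - x1) + x1 by rewrite -h1 subrK.
have ey2 : y2 = mu * (z2 - x2) + x2 by rewrite -h2 subrK.
rewrite ey1 ey2.
set fZ := _ - _.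
have : (m1 - p1) * (mu * (z2 - x2) + x2 - p2) - (m2 - p2) * (mu * (z1 - x1) + x1 - p1)
   - mu * fZ = (1 - mu) * ((m1 - p1) * (x2 - p2) - (m2 - p2) * (x1 - p1)) by rewrite /fZ; ring.
by rewrite hX mulr0 => /eqP; rewrite subr_eq0 => /eqP ->.
Qed.

Lemma telescope (R : fieldType) (F : nat -> R) a t :
  (forall k, (k <= t)%N -> F (a + k)%N != 0) ->
  \prod_(a <= j < a + t) (F j / F j.+1) = F a / F (a + t)%N.
Proof.
elim: t => [|t IH] h.
  by rewrite addn0 big_geq // divff // -{1}(addn0 a) h.
rewrite addnS big_nat_recr ?leq_addr // IH; last by move=> k hk; apply: h; rewrite ltnW.
rewrite /= mulrA divfK //; exact: h.
Qed.

Lemma shift1 (R : comRingType) (F : nat -> R) n :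
  (forall k, F (k + n)%N = F k) ->
  \prod_(1 <= i < n.+1) F i.+1 = \prod_(1 <= i < n.+1) F i.
Proof.
move=> hp; case: n hp => [|n] hp; first by rewrite !big_geq.
rewrite big_nat_recr // [RHS]big_nat_recl // /= mulrC; congr (_ * _).
by rewrite -(hp 1%N) add1n.
Qed.

Lemma shift (R : comRingType) (F : nat -> R) n c :
  (forall k, F (k + n)%N = F k) ->
  \prod_(1 <= i < n.+1) F (i + c)%N = \prod_(1 <= i < n.+1) F i.
Proof.
elim: c F => [|c IH] F hp; first by apply: eq_bigr => i _; rewrite addn0.
rewrite -(IH F hp) -(@shift1 _ (fun i => F (i + c)%N) n); last first.
  by move=> k; rewrite addnAC hp.
by apply: eq_bigr => i _; rewrite addnS addSn.
Qed.

Lemma online_l (R : rcfType) (X Y : point R) : on_line X Y X.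
Proof. rewrite /on_line; ring. Qed.
Lemma online_r (R : rcfType) (X Y : point R) : on_line X Y Y.
Proof. rewrite /on_line; ring. Qed.

Theorem theorem1 (R : rcfType) (n s t : nat) (A : nat -> point R) (M : point R)
    (Mij : nat -> nat -> point R) :
  (3 <= n)%N ->
  (0 < s)%N -> (0 < t)%N -> (2 * s + t)%N = n ->
  (* indices of vertices taken modulo n *)
  (forall k, A (k + n)%N = A k) ->
  (* M is distinct from all vertices *)
  (forall k, A k <> M) ->
  (* for i in 1..n and j in i+s .. i+s+t-1, the lines A_i M and A_j A_{j+1}
     meet in the single point Mij i j, which is neither A_j nor A_{j+1} *)
  (forall i j, (1 <= i <= n)%N -> (i + s <= j < i + s + t)%N ->
     [/\ on_line (A i) M (Mij i j),
         on_line (A j) (A j.+1) (Mij i j),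
         (forall P, on_line (A i) M P -> on_line (A j) (A j.+1) P -> P = Mij i j),
         Mij i j <> A j & Mij i j <> A j.+1]) ->
  \prod_(1 <= i < n.+1) \prod_(i + s <= j < i + s + t)
      sratio (Mij i j) (A j) (A j.+1) = (-1) ^+ n.
Proof.
move=> hn hs ht hnst hper hM hij.
pose g i k := fP M (A i) (A k).
have nz : forall i j, (1 <= i <= n)%N -> (i + s <= j <= i + s + t)%N -> g i j != 0.
  move=> i j hi /andP[hj1 hj2]; apply/eqP => e.
  case: (ltnP j (i + s + t)) => hj3.
    have [_ _ U ne _] := hij i j hi ltac:(by rewrite hj1 hj3).
    by apply: ne; apply/esym/U; [exact: e | exact: online_l].
  have ej : j = (i + s + t.-1).+1 by rewrite -addnS prednK //; apply/eqP; rewrite eqn_leq hj2.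
  have hj' : (i + s <= i + s + t.-1 < i + s + t)%N.
    by rewrite leq_addr /= -{2}(prednK ht) addnS ltnSn.
  have [_ _ U _ ne] := hij i _ hi hj'.
  rewrite -ej in U ne.
  by apply: ne; apply/esym/U; [exact: e | exact: online_r].
rewrite (eq_big_nat _ _ (F2 := fun i => g i (i + s)%N / g i (i + s + t)%N)); last first.
  move=> i /andP[hi1 hi2]; have hi : (1 <= i <= n)%N by rewrite hi1 -ltnS.
  rewrite (eq_big_nat _ _ (F2 := fun j => g i j / g i j.+1)); last first.
    move=> j hj; have [h1 h2 _ ne1 ne2] := hij i j hi hj.
    apply: term => //.
    by apply: nz => //; case/andP: hj => a b; rewrite (leq_trans a) //.
  rewrite (@telescope _ (g i) (i + s)%N t) // => k hk; apply: nz => //.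
  by rewrite leq_addr /= leq_add2l.
pose H k := ((A k).1 - M.1) * ((A (k + s)%N).2 - M.2) - ((A k).2 - M.2) * ((A (k + s)%N).1 - M.1).
have Hper : forall k, H (k + n)%N = H k.
  by move=> k; rewrite /H hper addnAC hper.
have eg1 : forall i, g i (i + s)%N = - H i by move=> i; rewrite /g /H /fP; ring.
have eg2 : forall i, g i (i + s + t)%N = H (i + s + t)%N.
  move=> i; rewrite /g /H /fP.
  have -> : (i + s + t + s = i + n)%N by rewrite -hnst; lia.
  rewrite hper; ring.
have PH : \prod_(1 <= i < n.+1) H i != 0.
  rewrite prodf_seq_neq0; apply/allP => i; rewrite mem_index_iota => hi /=.
  rewrite -oppr_eq0 -eg1; apply: nz; lia.
rewrite (eq_big_nat _ _ (F2 := fun i => (-1) * H i * (H (i + (s + t))%N)^-1)); last first.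
  by move=> i _; rewrite eg1 addnA eg2 mulN1r.
rewrite !big_split /= prodr_const_nat prodfV (@shift _ H n (s + t)) // subn1 /=.
by rewrite -mulrA divff // mulr1.
Qed.
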